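(* Let $\mathcal{P}\subseteq[0,1]^n$ be a polytope. If $\mathcal{F}$ is a strong Bernoulli factory for $\mathcal{P}$ that converges exponentially on $\mathcal{P}$, then $\mathcal{F}$ is differentiable.
   Context: A Bernoulli factory with output set $V$ (for inputs $x\in[0,1]^n$) is a (possibly infinite) rooted binary tree whose internal nodes are labeled by an index $i\in[n]$ or a known constant $c\in(0,1)$ and whose leaves are labeled by elements of $V$; on input $x$ one walks from the root, at a node labeled $i$ flipping a fresh independent coin that is $1$ with probability $x_i$, at a node labeled $c$ a fresh coin of bias $c$, following the edge labeled by the outcome, and outputs the label of the leaf reached; $\mathcal{F}(x)$ is the output and $T_{\mathcal{F}}(x)$ the depth of the leaf reached ($\infty$ if none). For a polytope $\mathcal{P}$ with vertex set $V$, a strong Bernoulli factory for $\mathcal{P}$ is such a factory with output set $V$ that terminates almost surely and satisfies $\mathbb{E}[\mathcal{F}(x)]=x$ for all $x\in\mathcal{P}$. $\mathcal{F}$ converges exponentially on $S$ if there is $c<1$ with $\Pr[T_{\mathcal{F}}(x)>d]\le c^d$ for all positive integers $d$ and all $x\in S$. Define $P_v(x)=\Pr[\mathcal{F}(x)=v]$ and $P_{v,T}(x)=\Pr[\mathcal{F}(x)=v\wedge T_{\mathcal{F}}(x)\le T]$; the latter is the polynomial equal to the sum, over leaves labeled $v$ at depth at most $T$, of the product of the transition probabilities along the root-to-leaf path. Let $\mathcal{H}(\mathcal{P})$ be the affine span of $\mathcal{P}$ and $\mathcal{H}_0(\mathcal{P})=\{y-y':y,y'\in\mathcal{H}(\mathcal{P})\}$.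 $\mathcal{F}$ is differentiable if for each $v\in V$ and each $u\in\mathcal{H}_0(\mathcal{P})$ with $\|u\|=1$, at every $x\in\mathcal{P}$ the directional derivative $\partial_uP_v(x)$ exists and equals $\lim_{T\to\infty}\partial_uP_{v,T}(x)$. *)

(* Defs.v *)
From HB Require Import structures.
From mathcomp Require Import all_boot all_order all_algebra.
From mathcomp Require Import all_classical all_reals all_analysis.
Set Implicit Arguments. Unset Strict Implicit. Unset Printing Implicit Defensive.
Import Order.TTheory GRing.Theory Num.Theory.
Import numFieldNormedType.Exports.
Local Open Scope ring_scope.
Local Open Scope classical_set_scope.

Section BernoulliFactory.
Variables (R : realType) (n : nat).
Local Notation pt := 'rV[R]_n.

(* Labels of the nodes of a (possibly infinite) rooted binary tree:
   coin index i, known constant c, or a leaf labelled by a point. *)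
Inductive node := NCoin of 'I_n | NConst of R | NLeaf of pt.

(* A tree is given by the label of the node reached along each path from the
   root; a path is a sequence of coin outcomes (true = outcome 1).  Entries for
   paths going below a leaf are irrelevant (they are not nodes of the tree). *)
Definition tree := seq bool -> node.

Definition is_leaf (a : node) : bool := if a is NLeaf _ then true else false.

Definition is_node (F : tree) (p : seq bool) : bool :=
  [forall k : 'I_(size p), ~~ is_leaf (F (take k p))].

Definition step_prob (a : node) (x : pt) (b : bool) : R :=
  match a with
  | NCoin i => if b then x 0 i else 1 - x 0 i
  | NConst c => if b then c else 1 - c
  | NLeaf _ => 0
  end.

Fixpoint path_weight (F : tree) (x : pt) (pre s : seq bool) : R :=
  match s with
  | [::] => 1
  | b :: s' => step_prob (F pre) x b * path_weight F x (rcons pre b) s'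
  end.

Definition weight (F : tree) (x : pt) (p : seq bool) : R := path_weight F x [::] p.

Definition leaf_mass (F : tree) (x : pt) (Q : pt -> bool) (T : nat) : R :=
  \sum_(k < T.+1) \sum_(t : k.-tuple bool)
     (if is_node F t then
        match F t with NLeaf w => if Q w then weight F x t else 0 | _ => 0 end
      else 0).

(* P_{v,T}(x) = Pr[F(x) = v /\ T_F(x) <= T] *)
Definition PvT (F : tree) (v : pt) (T : nat) (x : pt) : R := leaf_mass F x (pred1 v) T.

(* Pr[T_F(x) <= T] *)
Definition PrTle (F : tree) (T : nat) (x : pt) : R := leaf_mass F x predT T.

(* P_v(x) = Pr[F(x) = v] = sum over all leaves labelled v (countable additivity) *)
Definition Pv (F : tree) (v : pt) (x : pt) : R := lim ((fun T => PvT F v T x) @ \oo).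

Definition factory_with_outputs (F : tree) (V : seq pt) : Prop :=
  forall p, is_node F p ->
    match F p with
    | NCoin _ => True
    | NConst c => 0 < c < 1
    | NLeaf w => w \in V
    end.

Definition unit_cube : set pt := [set x | forall i, 0 <= x 0 i <= 1].

Definition conv_hull (V : seq pt) : set pt :=
  [set x | exists w : 'I_(size V) -> R,
      (forall i, 0 <= w i) /\ \sum_i w i = 1 /\ x = \sum_i w i *: V`_i].

Definition is_vertex_set (V : seq pt) : Prop :=
  uniq V /\ forall v, v \in V -> ~ conv_hull (rem v V) v.

Definition aff_span (S : set pt) : set pt :=
  [set y | exists (m : nat) (p : 'I_m -> pt) (w : 'I_m -> R),
      (forall i, S (p i)) /\ \sum_i w i = 1 /\ y = \sum_i w i *: p i].

Definition aff_dir (S : set pt) : set pt :=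
  [set z | exists y y', aff_span S y /\ aff_span S y' /\ z = y - y'].

Definition unit_norm (u : pt) : Prop := \sum_i (u 0 i) ^+ 2 = 1.

Definition strong_factory (F : tree) (V : seq pt) : Prop :=
  factory_with_outputs F V /\
  (forall x, conv_hull V x -> (fun T => PrTle F T x) @ \oo --> (1 : R)) /\
  (forall x, conv_hull V x -> \sum_(v <- V) Pv F v x *: v = x).

Definition converges_exp (F : tree) (S : set pt) : Prop :=
  exists c : R, c < 1 /\
    forall d : nat, (0 < d)%N -> forall x, S x -> 1 - PrTle F d x <= c ^+ d.

(* differentiability: for v in V, u in H_0(P) with |u| = 1, x in P, the
   directional derivative of P_v at x along u (taken within P, since P_v is
   only meaningful there) exists and equals lim_T of the directional
   derivatives of the polynomials P_{v,T}. *)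
Definition differentiable_factory (F : tree) (V : seq pt) : Prop :=
  forall v, v \in V -> forall u, aff_dir (conv_hull V) u -> unit_norm u ->
  forall x, conv_hull V x ->
  exists L : R,
    (fun T => derive1 (fun t : R => PvT F v T (x + t *: u)) 0) @ \oo --> L /\
    (fun t : R => t^-1 * (Pv F v (x + t *: u) - Pv F v x))
      @ within (fun t : R => conv_hull V (x + t *: u)) 0^' --> L.

End BernoulliFactory.

(* Main.v *)
Require Import Defs.
From HB Require Import structures.
From mathcomp Require Import all_boot all_order all_algebra.
From mathcomp Require Import all_classical all_reals all_analysis.
From mathcomp Require Import ring lra.
Set Implicit Arguments. Unset Strict Implicit. Unset Printing Implicit Defensive.
Import Order.TTheory GRing.Theory Num.Theory.
Import numFieldNormedType.Exports.
Local Open Scope ring_scope.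
Local Open Scope classical_set_scope.

Section Gen.
Variable R : realType.

Lemma is_derive_quot (g : R -> R) (dg : R) : is_derive (0 : R) (1 : R) g dg ->
  (fun h : R => h^-1 * (g h - g 0)) @ 0^' --> dg.
Proof.
move=> [dv dval]; rewrite -dval.
have -> : (fun h : R => h^-1 * (g h - g 0)) =
  (fun h => h^-1 *: ((g \o shift 0) (h *: 1) - g 0)).
  by apply: funext => h /=; rewrite addr0 /GRing.scale /= mulr1.
exact: dv.
Qed.

Lemma lim_dist_le (a : R^nat) (A C K : R) N : a @ \oo --> A ->
  (forall T, (N <= T)%N -> `|a T - C| <= K) -> `|A - C| <= K.
Proof.
move=> ha hK.
have h : (fun T => `|a T - C|) @ \oo --> `|A - C|.
  apply: cvg_norm; apply: cvgB => //; exact: cvg_cst.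
rewrite -(cvg_lim _ h) //; apply: limr_le; first exact: cvgP h.
by near=> T; apply: hK; near: T; exact: nbhs_infty_ge.
Unshelve. all: by end_near.
Qed.

Lemma geo_sum (c : R) T : (1 - c) ^+ 2 * \sum_(j < T) (j%:R + 1) * c ^+ j =
  1 - (T%:R + 1) * c ^+ T + T%:R * c ^+ T.+1.
Proof.
elim: T => [|T IH]; first by rewrite big_ord0 mulr0 expr0 mul0r; lra.
rewrite big_ord_recr /= mulrDr IH -natr1 !exprS.
ring.
Qed.

Lemma geo_bound (c : R) T : 0 <= c < 1 ->
  \sum_(j < T) (j%:R + 1) * c ^+ j <= ((1 - c) ^+ 2)^-1.
Proof.
move=> /andP[c0 c1].
have p : 0 < (1 - c) ^+ 2 by rewrite exprn_gt0 // subr_gt0.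
rewrite -[X in _ <= X]mulr1 ler_pdivlMl //.
rewrite geo_sum [c ^+ T.+1]exprS.
have X0 : 0 <= c ^+ T by rewrite exprn_ge0.
have T0 : 0 <= T%:R :> R by rewrite ler0n.
have : 0 <= T%:R * c ^+ T by rewrite mulr_ge0.
nra.
Qed.

Lemma mvt_abs (f df : R -> R) (t M : R) :
  (forall s : R, is_derive s (1 : R) f (df s)) ->
  (forall s, `|s| <= `|t| -> 0 <= s * t -> `|df s| <= M) ->
  `|f t - f 0| <= `|t| * M.
Proof.
move=> hd hM.
have cont : forall a b : R, {within `[a, b], continuous f}.
  move=> a b; apply: derivable_within_continuous => s _.
  by have [] := hd s.
have [t0|t0] := leP 0 t.
  have [s hs E] := MVT_segment t0 (fun s _ => hd s) (cont 0 t).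
  rewrite E subr0 normrM mulrC ler_wpM2l //.
  move: hs; rewrite in_itv /= => /andP[s0 st]; apply: hM.
    by rewrite !ger0_norm.
  by rewrite mulr_ge0.
have [s hs E] := MVT_segment (ltW t0) (fun s _ => hd s) (cont t 0).
rewrite -normrN opprB E sub0r normrM mulrC normrN ler_wpM2l //.
move: hs; rewrite in_itv /= => /andP[ts s0]; apply: hM.
  by rewrite !ler0_norm // ?(ltW t0) // lerN2.
by rewrite mulr_le0 // ltW.
Qed.

Lemma sum_diff (f : nat -> R) T T' : (T <= T')%N ->
  \sum_(k < T'.+1) f k - \sum_(k < T.+1) f k = \sum_(T.+1 <= k < T'.+1) f k.
Proof.
move=> h; rewrite -!(big_mkord xpredT) [X in X - _](@big_cat_nat _ _ _ T.+1) //=.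
by rewrite addrAC subrr add0r.
Qed.

End Gen.

Section Aux.
Variables (R : realType) (n : nat) (F : tree R n).
Local Notation pt := 'rV[R]_n.

Definition dstep (a : node R n) (u : pt) (b : bool) : R :=
  match a with NCoin i => if b then u 0 i else - u 0 i | _ => 0 end.

Fixpoint path_dw (z u : pt) (pre s : seq bool) : R :=
  match s with
  | [::] => 0
  | b :: s' => dstep (F pre) u b * path_weight F z (rcons pre b) s'
               + step_prob (F pre) z b * path_dw z u (rcons pre b) s'
  end.

Lemma step_line a (z u : pt) (t : R) b :
  step_prob a (z + t *: u) b = step_prob a z b + t * dstep a u b.
Proof.
case: a => [i|c|w] /=; last by rewrite mulr0 addr0.
  by case: b; rewrite !mxE; lra.
by case: b; rewrite mulr0 addr0.
Qed.

Lemma dstep_diff a (z q : pt) b :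
  dstep a (q - z) b = step_prob a q b - step_prob a z b.
Proof. by case: a => [i|c|w] /=; [case: b; rewrite !mxE; lra | lra | lra]. Qed.

Lemma dstepD a (u1 u2 : pt) b : dstep a (u1 + u2) b = dstep a u1 b + dstep a u2 b.
Proof. by case: a => [i|c|w] /=; [case: b; rewrite !mxE; lra | lra | lra]. Qed.

Lemma dstepZ a (k : R) (u : pt) b : dstep a (k *: u) b = k * dstep a u b.
Proof. by case: a => [i|c|w] /=; [case: b; rewrite !mxE; lra | lra | lra]. Qed.

Lemma step_sum1 a (z : pt) : ~~ is_leaf a -> step_prob a z true + step_prob a z false = 1.
Proof. by case: a => [i|c|w] //= _; lra. Qed.

Lemma path_dwD z u1 u2 pre s :
  path_dw z (u1 + u2) pre s = path_dw z u1 pre s + path_dw z u2 pre s.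
Proof.
elim: s pre => [|b s IH] pre /=; first by rewrite addr0.
rewrite IH dstepD; lra.
Qed.

Lemma path_dwZ z k u pre s : path_dw z (k *: u) pre s = k * path_dw z u pre s.
Proof.
elim: s pre => [|b s IH] pre /=; first by rewrite mulr0.
rewrite IH dstepZ; lra.
Qed.

Lemma path_weight_rcons z pre s b :
  path_weight F z pre (rcons s b) = path_weight F z pre s * step_prob (F (pre ++ s)) z b.
Proof.
elim: s pre => [|c s IH] pre /=; first by rewrite cats0 mulr1 mul1r.
by rewrite IH cat_rcons mulrA.
Qed.

Lemma is_derive_pw (z u : pt) pre s (t0 : R) :
  is_derive t0 1 (fun t : R => path_weight F (z + t *: u) pre s)
    (path_dw (z + t0 *: u) u pre s).
Proof.
elim: s pre => [|b s IH] pre /=; first exact: is_derive_cst.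
have H1 : is_derive t0 1 (fun t : R => step_prob (F pre) (z + t *: u) b) (dstep (F pre) u b).
  have -> : (fun t : R => step_prob (F pre) (z + t *: u) b) =
     (cst (step_prob (F pre) z b) + (@id R) * cst (dstep (F pre) u b)).
    by apply: funext => t /=; rewrite step_line.
  apply: is_derive_eq.
  by rewrite /= /GRing.scale /=; lra.
have -> : (fun t : R => step_prob (F pre) (z + t *: u) b *
      path_weight F (z + t *: u) (rcons pre b) s) =
   (fun t : R => step_prob (F pre) (z + t *: u) b) *
   (fun t : R => path_weight F (z + t *: u) (rcons pre b) s) by [].
apply: (is_derive_eq (is_deriveM H1 (IH _))).
by rewrite /GRing.scale /= addrC mulrC [X in _ + X]mulrC.
Qed.


Lemma lorentz (z q : pt) (h : R) pre s :
  0 <= h <= 1 ->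
  (forall j b, (j < size s)%N ->
     0 <= step_prob (F (pre ++ take j s)) z b /\ 0 <= step_prob (F (pre ++ take j s)) q b) ->
  [/\ 0 <= path_weight F z pre s,
       (1 - h) ^+ size s * path_weight F z pre s <= path_weight F (z + h *: (q - z)) pre s,
       - (size s)%:R * path_weight F z pre s <= path_dw z (q - z) pre s &
       h * (1 - h) ^+ size s * (path_dw z (q - z) pre s + (size s)%:R * path_weight F z pre s)
         <= path_weight F (z + h *: (q - z)) pre s].
Proof.
move=> /andP[h0 h1]; elim: s pre => [|b s IH] pre Hs /=.
  rewrite expr0; split; rewrite ?mulr0 ?mulr1 ?mul1r ?addr0 ?oppr0 ?mul0r //; lra.
have [a0 e0] := Hs 0%N b isT; rewrite take0 cats0 in a0 e0.
have Hs' : forall j b', (j < size s)%N ->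
  0 <= step_prob (F (rcons pre b ++ take j s)) z b' /\
  0 <= step_prob (F (rcons pre b ++ take j s)) q b'.
  by move=> j b' hj; have := Hs j.+1 b' hj; rewrite /= -cat_rcons.
have [W0 Wh W D] := IH (rcons pre b) Hs'.
rewrite step_line dstep_diff.
set a := step_prob (F pre) z b in a0 *; set e := step_prob (F pre) q b in e0 *.
set W' := path_weight F z (rcons pre b) s in W0 Wh W D *.
set Wh' := path_weight F _ (rcons pre b) s in Wh D *.
set D' := path_dw _ _ (rcons pre b) s in W D *.
set X := (1 - h) ^+ size s in Wh D *.
have X0 : 0 <= X by rewrite exprn_ge0 // subr_ge0.
have X1 : X <= 1 by rewrite exprn_ile1 // ?subr_ge0 // lerBlDr lerDl.
rewrite exprS -/X -[(size s).+1]addn1 natrD.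
set d := (size s)%:R in W D *.
have d0 : 0 <= d by rewrite ler0n.
have eW : 0 <= e * W' by rewrite mulr_ge0.
have aW : 0 <= a * W' by rewrite mulr_ge0.
have XW : 0 <= X * W' by rewrite mulr_ge0.
have Wh0 : 0 <= Wh' by apply: le_trans Wh; rewrite mulr_ge0.
have m0 : (1 - h) * a <= a + h * (e - a) by nra.
split.
- by rewrite mulr_ge0.
- have : (1 - h) * a * (X * W') <= (a + h * (e - a)) * Wh'.
    apply: ler_pM => //; first by rewrite mulr_ge0 // subr_ge0.
  nra.
- have : a * (- d * W') <= a * D' by rewrite ler_wpM2l.
  nra.
- have H2 : (1 - h) * a * (h * X * (D' + d * W')) <= (1 - h) * a * Wh'.
    by rewrite ler_wpM2l // mulr_ge0 // subr_ge0.
  have H3 : h * e * (X * W') <= h * e * Wh' by rewrite ler_wpM2l // mulr_ge0.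
  have H4 : h * (1 - h) * (e * (X * W')) <= h * (e * (X * W')).
    have : 0 <= e * (X * W') by rewrite !mulr_ge0.
    nra.
  nra.
Qed.

Definition sel (Q : pt -> bool) (p : seq bool) : R :=
  if is_node F p then (match F p with NLeaf w => if Q w then 1 else 0 | _ => 0 end) else 0.

Definition lev (y : pt) Q k := \sum_(t : k.-tuple bool) sel Q t * weight F y t.
Definition levD (z u : pt) Q k := \sum_(t : k.-tuple bool) sel Q t * path_dw z u [::] t.
Definition alln (y : pt) k := \sum_(t : k.-tuple bool) (if is_node F t then weight F y t else 0).

Lemma leaf_mass_lev y Q T : leaf_mass F y Q T = \sum_(k < T.+1) lev y Q k.
Proof.
apply: eq_bigr => k _; apply: eq_bigr => t _; rewrite /sel.
case: (is_node F t); last by rewrite mul0r.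
by case: (F t) => [i|c|w]; rewrite ?mul0r //; case: (Q w); rewrite ?mul0r ?mul1r.
Qed.

Lemma sum_tuple_rcons k (f : seq bool -> R) :
  \sum_(t : k.+1.-tuple bool) f t = \sum_(t : k.-tuple bool) (f (rcons t true) + f (rcons t false)).
Proof.
have -> : \sum_(t : k.-tuple bool) (f (rcons t true) + f (rcons t false)) =
   \sum_(p : k.-tuple bool * bool) f (rcons p.1 p.2).
  rewrite -(pair_bigA _ (fun (t : k.-tuple bool) (b : bool) => f (rcons t b))) /=.
  apply: eq_bigr => t _; rewrite big_bool /=; by rewrite addrC.
pose h (p : k.-tuple bool * bool) : k.+1.-tuple bool := [tuple of rcons p.1 p.2].
pose g (t : k.+1.-tuple bool) : k.-tuple bool * bool :=
  ([tuple of belast (head false t) (behead t)], last (head false t) (behead t)).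
rewrite (reindex h) /=; last first.
  exists g => [[[s' Hs] b] _|[s' Hs] _].
    rewrite /g /h /=; congr pair; last by case: s' {Hs} => [|x s'] //=; rewrite last_rcons.
    apply/val_inj => /=; case: s' {Hs} => [|x s'] //=; by rewrite belast_rcons.
  apply/val_inj => /=.
  case: s' Hs => [|x s'] Hs //=.
  by rewrite -lastI.
by [].
Qed.

Lemma is_node_rcons t b : is_node F (rcons t b) = is_node F t && ~~ is_leaf (F t).
Proof.
apply/idP/idP.
  move=> /forallP H; apply/andP; split.
    apply/forallP => -[j hj] /=.
    have hj' : (j < size (rcons t b))%N by rewrite size_rcons ltnS ltnW.
    by have := H (Ordinal hj'); rewrite /= -cats1 takel_cat // ltnW.
  have hj' : (size t < size (rcons t b))%N by rewrite size_rcons.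
  by have := H (Ordinal hj'); rewrite /= -cats1 takel_cat // take_size.
move=> /andP[/forallP H Hl]; apply/forallP => -[j hj] /=.
move: hj; rewrite size_rcons ltnS leq_eqVlt => /orP[/eqP ->|hj].
  by rewrite -cats1 takel_cat // take_size.
by have := H (Ordinal hj); rewrite /= -cats1 takel_cat // ltnW.
Qed.

Lemma weight_rcons y t b : weight F y (rcons t b) = weight F y t * step_prob (F t) y b.
Proof. by rewrite /weight path_weight_rcons. Qed.

Lemma alln_succ y k : alln y k.+1 = alln y k - lev y predT k.
Proof.
rewrite /alln /lev (sum_tuple_rcons k (fun t => if is_node F t then weight F y t else 0)) -sumrB; apply: eq_bigr => t _.
rewrite !is_node_rcons /sel.
case: (is_node F t) => /=; last by rewrite mul0r; lra.
case E: (F t) => [i|c|w] /=.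
- by rewrite !weight_rcons E -mulrDr step_sum1 // mulr1 mul0r subr0.
- by rewrite !weight_rcons E -mulrDr step_sum1 // mulr1 mul0r subr0.
- by rewrite mul1r; lra.
Qed.

Lemma alln0 y : alln y 0 = 1.
Proof.
rewrite /alln (eq_bigr (fun _ => 1)); last first.
  move=> t _; rewrite (tuple0 t) /=.
  have -> : is_node F [::] by apply/forallP => -[].
  by [].
by rewrite sumr_const card_tuple expn0.
Qed.

Lemma PrTle_alln y T : PrTle F T y = 1 - alln y T.+1.
Proof.
rewrite /PrTle leaf_mass_lev.
elim: T => [|T IH]; first by rewrite big_ord1 alln_succ alln0; lra.
by rewrite big_ord_recr /= IH [alln y T.+2]alln_succ; lra.
Qed.

Lemma node_take t j : is_node F t -> (j <= size t)%N -> is_node F (take j t).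
Proof.
move=> /forallP H hj; apply/forallP => -[k hk] /=.
move: hk; rewrite size_takel // => hk.
have hk' : (k < size t)%N by apply: leq_trans hk _.
rewrite take_takel; last exact: ltnW.
exact: (H (Ordinal hk')).
Qed.

Lemma node_steps (V : seq pt) y t j b :
  factory_with_outputs F V -> unit_cube y -> is_node F t -> (j < size t)%N ->
  0 <= step_prob (F ([::] ++ take j t)) y b.
Proof.
move=> Hf Hy Hn hj /=.
have Hl : ~~ is_leaf (F (take j t)) by move/forallP: Hn => /(_ (Ordinal hj)).
have := Hf _ (node_take Hn (ltnW hj)).
case: (F (take j t)) Hl => [i|c|w] //= _.
  by have /andP[h0 h1] := Hy i; case: b; lra.
by move=> /andP[c0 c1]; case: b; lra.
Qed.

Lemma weight_ge0 (V : seq pt) y t :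
  factory_with_outputs F V -> unit_cube y -> is_node F t -> 0 <= weight F y t.
Proof.
move=> Hf Hy Hn.
have [] // := @lorentz y y 0 [::] t _ _.
  by rewrite lexx ler01.
move=> j b hj; split; exact: (node_steps b Hf Hy Hn hj).
Qed.

Lemma sel_prop Q t : (0 <= sel Q t <= 1) /\ (sel Q t != 0 -> is_node F t).
Proof.
rewrite /sel; case: (is_node F t); last by rewrite lexx ler01 eqxx.
by case: (F t) => [i|c|w]; rewrite ?lexx ?ler01 ?eqxx //; case: (Q w); rewrite ?lexx ?ler01 ?eqxx.
Qed.

Lemma is_derive_big (I : finType) (f : I -> R -> R) (df : I -> R) (t0 : R) :
  (forall i, is_derive t0 1 (f i) (df i)) ->
  is_derive t0 1 (fun t => \sum_i f i t) (\sum_i df i).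
Proof.
move=> H; rewrite -fct_sumE.
elim/big_rec2: _ => [|i y1 y2 _ IH]; first exact: (is_derive_cst (0 : R)).
exact: is_deriveD.
Qed.

Lemma is_derive_scal (f : R -> R) (c df t0 : R) :
  is_derive t0 1 f df -> is_derive t0 1 (fun t => c * f t) (c * df).
Proof. by move=> H; have := is_deriveZ c H. Qed.

Lemma is_derive_lev (z u : pt) Q k (t0 : R) :
  is_derive t0 1 (fun t : R => lev (z + t *: u) Q k) (levD (z + t0 *: u) u Q k).
Proof.
apply: is_derive_big => t; apply: is_derive_scal; exact: is_derive_pw.
Qed.

Lemma is_derive_PvT v T (z u : pt) (t0 : R) :
  is_derive t0 1 (fun t : R => PvT F v T (z + t *: u))
    (\sum_(k < T.+1) levD (z + t0 *: u) u (pred1 v) k).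
Proof.
rewrite /PvT; under [X in is_derive _ _ X]funext => t do rewrite leaf_mass_lev.
apply: is_derive_big => k; exact: is_derive_lev.
Qed.

Lemma levDD z u1 u2 Q k : levD z (u1 + u2) Q k = levD z u1 Q k + levD z u2 Q k.
Proof. by rewrite /levD -big_split; apply: eq_bigr => t _; rewrite path_dwD mulrDr. Qed.

Lemma levDZ z a u Q k : levD z (a *: u) Q k = a * levD z u Q k.
Proof. by rewrite /levD mulr_sumr; apply: eq_bigr => t _; rewrite path_dwZ mulrCA. Qed.

Lemma levD_sum z Q k (I : finType) (f : I -> pt) :
  levD z (\sum_i f i) Q k = \sum_i levD z (f i) Q k.
Proof.
elim/big_rec2: _ => [|i y1 y2 _ <-]; last by rewrite levDD.
by rewrite -(scale0r (0 : pt)) levDZ mul0r.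
Qed.

Lemma conv_convex (V : seq pt) z q h : conv_hull V z -> conv_hull V q -> 0 <= h <= 1 ->
  conv_hull V (z + h *: (q - z)).
Proof.
move=> [wz [wz0 [wz1 ->]]] [wq [wq0 [wq1 ->]]] /andP[h0 h1].
exists (fun i => (1 - h) * wz i + h * wq i); split; [|split].
- by move=> i; rewrite addr_ge0 // mulr_ge0 // subr_ge0.
- by rewrite big_split /= -!mulr_sumr wz1 wq1; lra.
- apply/rowP => j; rewrite !mxE !summxE.
  under [RHS]eq_bigr => i _ do rewrite !mxE mulrDl.
  rewrite big_split /=.
  rewrite (eq_bigr (fun k => wz k * V`_k 0 j)); last by move=> k _; rewrite mxE.
  rewrite [X in _ * (X - _)](eq_bigr (fun k => wq k * V`_k 0 j)); last by move=> k _; rewrite mxE.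
  rewrite [X in _ = X + _](eq_bigr (fun i => (1 - h) * (wz i * V`_i 0 j))); last by move=> i _; rewrite mulrA.
  rewrite [X in _ = _ + X](eq_bigr (fun i => h * (wq i * V`_i 0 j))); last by move=> i _; ring.
  rewrite -!mulr_sumr; ring.
Qed.

Lemma levDB z u1 u2 Q k : levD z (u1 - u2) Q k = levD z u1 Q k - levD z u2 Q k.
Proof. by rewrite levDD -scaleN1r levDZ mulN1r. Qed.

Section Fac.
Variables (V : seq pt) (Hf : factory_with_outputs F V).

Lemma selw_ge0 y Q t : unit_cube y -> 0 <= sel Q t * weight F y t.
Proof.
move=> Hy; have [/andP[s0 s1] sn] := sel_prop Q t.
have [->|/sn Hn] := eqVneq (sel Q t) 0; first by rewrite mul0r.
by rewrite mulr_ge0 // (weight_ge0 Hf Hy Hn).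
Qed.

Lemma lev_ge0 y Q k : unit_cube y -> 0 <= lev y Q k.
Proof. by move=> Hy; apply: sumr_ge0 => t _; exact: selw_ge0. Qed.

Lemma lev_le_alln y Q k : unit_cube y -> lev y Q k <= alln y k.
Proof.
move=> Hy; apply: ler_sum => t _.
have [/andP[s0 s1] sn] := sel_prop Q t.
have [->|/sn Hn] := eqVneq (sel Q t) 0.
  by rewrite mul0r; case: ifP => // Hn; exact: (weight_ge0 Hf Hy Hn).
rewrite Hn; have := weight_ge0 Hf Hy Hn; nra.
Qed.

Lemma alln_le1 y k : unit_cube y -> alln y k <= 1.
Proof.
move=> Hy; elim: k => [|k IH]; first by rewrite alln0.
by rewrite alln_succ; have := lev_ge0 predT k Hy; lra.
Qed.

Lemma lev_le_exp y Q k (c : R) : unit_cube y ->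
  (forall d : nat, (0 < d)%N -> 1 - PrTle F d y <= c ^+ d) ->
  lev y Q k <= c ^+ k.-1.
Proof.
move=> Hy Hc; apply: le_trans (lev_le_alln Q k Hy) _.
case: k => [|[|k]] /=; rewrite ?expr0; try exact: alln_le1.
by have := Hc k.+1 isT; rewrite PrTle_alln; lra.
Qed.

Lemma bernoulli_ineq (h : R) k : 0 <= h <= 1 -> 1 - k%:R * h <= (1 - h) ^+ k.
Proof.
move=> /andP[h0 h1]; elim: k => [|k IH]; first by rewrite mul0r subr0 expr0.
rewrite exprS -[k.+1]addn1 natrD.
have K0 : 0 <= k%:R :> R by rewrite ler0n.
have H1 : (1 - h) * (1 - k%:R * h) <= (1 - h) * (1 - h) ^+ k by rewrite ler_wpM2l // subr_ge0.
have : 0 <= k%:R * (h * h) by rewrite !mulr_ge0.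
nra.
Qed.

Definition hk (k : nat) : R := (2 * (k%:R + 1))^-1.

Lemma hk_prop k : 0 < hk k /\ hk k * (k%:R + 1) = 2^-1.
Proof.
rewrite /hk; split; first by rewrite invr_gt0 mulr_gt0 // ltr_wpDl // ler0n.
have H : k%:R + 1 != 0 :> R by rewrite gt_eqF // ltr_wpDl // ler0n.
by rewrite invfM -mulrA mulVf // mulr1.
Qed.

Lemma pathD_bound z q t k : unit_cube z -> unit_cube q -> is_node F t -> size t = k ->
  `|path_dw z (q - z) [::] t| <=
     k%:R * weight F z t + 4 * (k%:R + 1) * weight F (z + hk k *: (q - z)) t.
Proof.
move=> Hz Hq Hn Hs.
have [h0 hK] := hk_prop k.
set h := hk k in h0 hK *.
have h1 : h <= 1.
  have : 1 <= k%:R + 1 :> R by rewrite lerDr ler0n.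
  nra.
have hh : 0 <= h <= 1 by rewrite h1 ltW.
have [W0 _ DL DU] := @lorentz z q h [::] t hh
  (fun j b hj => conj (node_steps b Hf Hz Hn hj) (node_steps b Hf Hq Hn hj)).
rewrite Hs in DL DU.
move: W0 DL DU; rewrite -/(weight F z t) -/(weight F _ t).
set W := weight F z t; set Wh := weight F _ t; set D := path_dw _ _ _ t.
set K := k%:R; move=> W0 DL DU.
have K0 : 0 <= K by rewrite ler0n.
have B := bernoulli_ineq k hh.
have X : 2^-1 <= (1 - h) ^+ k.
  apply: le_trans B; rewrite -/K.
  have : K * h = 2^-1 - h by rewrite -hK; lra.
  lra.
have S0 : 0 <= D + K * W by lra.
have : h * 2^-1 * (D + K * W) <= Wh.
  apply: le_trans DU; rewrite -mulrA -[X in _ <= X]mulrA ler_wpM2l ?(ltW h0) //.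
  by rewrite ler_wpM2r.
move=> H; rewrite ler_norml; apply/andP; split.
  have : 0 <= Wh by apply: le_trans H; rewrite !mulr_ge0 // ?(ltW h0) // invr_ge0 ler0n.
  nra.
have E : 4 * (K + 1) * (h * 2^-1 * (D + K * W)) = D + K * W.
  have -> : 4 * (K + 1) * (h * 2^-1 * (D + K * W)) = 4 * 2^-1 * (h * (K + 1)) * (D + K * W) by ring.
  by rewrite hK; field.
have : 4 * (K + 1) * (h * 2^-1 * (D + K * W)) <= 4 * (K + 1) * Wh.
  by rewrite ler_wpM2l // mulr_ge0 // addr_ge0.
rewrite E; nra.
Qed.

Lemma levD_bound z q Q k : unit_cube z -> unit_cube q ->
  `|levD z (q - z) Q k| <=
     k%:R * lev z Q k + 4 * (k%:R + 1) * lev (z + hk k *: (q - z)) Q k.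
Proof.
move=> Hz Hq; rewrite /levD /lev !mulr_sumr -big_split /=.
apply: le_trans (ler_norm_sum _ _ _) _; apply: ler_sum => t _.
have [/andP[s0 s1] sn] := sel_prop Q t.
have [->|/sn Hn] := eqVneq (sel Q t) 0; first by rewrite !mul0r !mulr0 normr0 addr0.
rewrite normrM ger0_norm //.
apply: le_trans (ler_wpM2l s0 (pathD_bound Hz Hq Hn (size_tuple t))) _.
by rewrite le_eqVlt; apply/orP; left; apply/eqP; ring.
Qed.

Lemma sel_le Q t : sel Q t <= sel predT t.
Proof.
rewrite /sel; case: (is_node F t) => //.
by case: (F t) => [i|c|w] //; case: (Q w); rewrite ?ler01.
Qed.

Lemma PvT_lev v T y : PvT F v T y = \sum_(k < T.+1) lev y (pred1 v) k.
Proof. by rewrite /PvT leaf_mass_lev. Qed.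

Lemma PvT_cvg v y : unit_cube y -> cvg ((fun T => PvT F v T y) @ \oo).
Proof.
move=> Hy; apply: nondecreasing_is_cvgn.
  apply/nondecreasing_seqP => T; rewrite !PvT_lev [X in _ <= X]big_ord_recr /= lerDl.
  exact: lev_ge0.
exists 1 => _ [T _ <-]; rewrite PvT_lev.
apply: le_trans (_ : \sum_(k < T.+1) lev y predT k <= 1).
  apply: ler_sum => k _; apply: ler_sum => t _.
  have [/andP[s0 s1] sn] := sel_prop (pred1 v) t.
  have [->|/sn Hn] := eqVneq (sel (pred1 v) t) 0.
    by rewrite mul0r; apply: selw_ge0.
  by apply: ler_wpM2r; [exact: (weight_ge0 Hf Hy Hn)|exact: sel_le].
have := PrTle_alln y T; rewrite /PrTle leaf_mass_lev => ->.
have := lev_le_alln predT T.+1 Hy; have := lev_ge0 predT T.+1 Hy; lra.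
Qed.

End Fac.

End Aux.

Theorem theorem7p10 (R : realType) (n : nat) (V : seq 'rV[R]_n) (F : tree R n) :
  is_vertex_set V -> conv_hull V `<=` @unit_cube R n ->
  strong_factory F V -> converges_exp F (conv_hull V) ->
  differentiable_factory F V.
Proof.
move=> _ Hcube [Hf [_ _]] [c [c1 Hc]] v vV u.
move=> [y [y' [[m [p [w [Hp [Hw1 Ey]]]]] [[m' [p' [w' [Hp' [Hw1' Ey']]]]] ->]]]] _ x Px.
set P := conv_hull V in Hcube Hc Hp Hp' Px *.
set Q := pred1 v.
have HcP : forall z, P z -> forall d, (0 < d)%N -> 1 - PrTle F d z <= c ^+ d.
  by move=> z Pz d hd; exact: Hc.
have c0 : 0 <= c.
  have := Hc 1%N isT x Px; rewrite PrTle_alln expr1.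
  have := lev_le_alln Hf predT 2 (Hcube x Px); have := lev_ge0 Hf predT 2 (Hcube _ Px).
  lra.
pose b k := (5 * k%:R + 4) * c ^+ k.-1.
have b0 : forall k, 0 <= b k.
  by move=> k; rewrite mulr_ge0 ?exprn_ge0 // addr_ge0 // mulr_ge0 // ler0n.
have Hb : forall z q, P z -> P q -> forall k, `|levD F z (q - z) Q k| <= b k.
  move=> z q Pz Pq k.
  apply: le_trans (levD_bound Hf Q k (Hcube _ Pz) (Hcube _ Pq)) _.
  have [h0 hK] := hk_prop R k.
  have hh : 0 <= hk R k <= 1.
    rewrite ltW //=; have : 1 <= k%:R + 1 :> R by rewrite lerDr ler0n.
    nra.
  have Pzh := conv_convex Pz Pq hh.
  have L1 := lev_le_exp Hf Q k (Hcube _ Pz) (HcP z Pz).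
  have L2 := lev_le_exp Hf Q k (Hcube _ Pzh) (HcP _ Pzh).
  have K0 : 0 <= k%:R :> R by rewrite ler0n.
  have H1 := ler_wpM2l K0 L1.
  have H2 : 0 <= 4 * (k%:R + 1) :> R by rewrite mulr_ge0 // addr_ge0.
  have H3 := ler_wpM2l H2 L2.
  rewrite /b; lra.
pose B := \sum_i `|w i| + \sum_i `|w' i|.
have B0 : 0 <= B by rewrite addr_ge0 // sumr_ge0.
have HB : forall z, P z -> forall k, `|levD F z (y - y') Q k| <= B * b k.
  move=> z Pz k.
  have -> : y - y' = \sum_i w i *: (p i - z) - \sum_i w' i *: (p' i - z).
    under eq_bigr => i _ do rewrite scalerBr.
    under [X in _ = _ - X]eq_bigr => i _ do rewrite scalerBr.
    rewrite !sumrB -!scaler_suml Hw1 Hw1' scale1r -Ey -Ey'.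
    by rewrite opprB addrA subrK.
  rewrite levDB !levD_sum.
  under eq_bigr => i _ do rewrite levDZ.
  under [X in `|_ - X|]eq_bigr => i _ do rewrite levDZ.
  apply: le_trans (ler_normB _ _) _.
  rewrite /B mulrDl; apply: lerD.
    rewrite mulr_suml; apply: le_trans (ler_norm_sum _ _ _) _; apply: ler_sum => i _.
    by rewrite normrM ler_wpM2l // Hb.
  rewrite mulr_suml; apply: le_trans (ler_norm_sum _ _ _) _; apply: ler_sum => i _.
  by rewrite normrM ler_wpM2l // Hb.
pose dd T := \sum_(k < T.+1) levD F x (y - y') Q k.
pose S T := \sum_(k < T.+1) b k.
have Snd : nondecreasing_seq S.
  apply/nondecreasing_seqP => T; rewrite /S [X in _ <= X]big_ord_recr /= lerDl; exact: b0.
have Sub : has_ubound (range S).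
  exists (4 + 9 * ((1 - c) ^+ 2)^-1) => _ [T _ <-].
  rewrite /S big_ord_recl /= {1}/b mulr0 add0r expr0 mulr1 lerD2l.
  have c01 : 0 <= c < 1 by rewrite c0 c1.
  apply: le_trans (_ : \sum_(j < T) 9 * ((j%:R + 1) * c ^+ j) <= _).
    apply: ler_sum => j _; rewrite /b /bump /= add1n /=.
    have X0 : 0 <= c ^+ j by rewrite exprn_ge0.
    have J0 : 0 <= j%:R :> R by rewrite ler0n.
    rewrite -natr1.
    nra.
  rewrite -mulr_sumr ler_wpM2l //; exact: geo_bound.
set Sinf := sup (range S).
have Scv : S @ \oo --> Sinf := nondecreasing_cvgn Snd Sub.
have SleS : forall T, S T <= Sinf.
  move=> T; rewrite -(cvg_lim _ Scv) //; apply: nondecreasing_cvgn_le => //.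
  exact: cvgP Scv.
have dd_cauchy : forall T T', (T <= T')%N -> `|dd T' - dd T| <= B * (S T' - S T).
  move=> T T' hT; rewrite /dd /S !sum_diff // mulr_sumr.
  apply: le_trans (ler_norm_sum _ _ _) _; apply: ler_sum => k _; exact: HB.
have dd_abs : forall T, `|dd T| <= B * S T.
  move=> T; rewrite /dd /S mulr_sumr.
  apply: le_trans (ler_norm_sum _ _ _) _; apply: ler_sum => k _; exact: HB.
have ddcv : cvg (dd @ \oo).
  pose a T := dd T + B * S T.
  have acv : cvg (a @ \oo).
    apply: nondecreasing_is_cvgn.
      apply/nondecreasing_seqP => T; rewrite /a /dd /S !big_ord_recr /=.
      have := HB x Px T.+1; rewrite ler_norml => /andP[h1 _].
      rewrite mulrDr; lra.
    exists (2 * (B * Sinf)) => _ [T _ <-]; rewrite /a.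
    have := dd_abs T; have := ler_wpM2l B0 (SleS T); rewrite ler_norml => h1 /andP[_ h2].
    lra.
  have -> : dd = (fun T => a T - B * S T) by apply: funext => T; rewrite /a addrK.
  apply: is_cvgB => //; apply: cvgP; exact: cvgMl_tmp Scv.
set L := lim (dd @ \oo).
have ddL : dd @ \oo --> L := ddcv.
have ddL_bound : forall N, `|L - dd N| <= B * (Sinf - S N).
  move=> N; apply: (lim_dist_le ddL (N := N)) => T hT.
  apply: le_trans (dd_cauchy _ _ hT) _; apply: ler_wpM2l => //; have := SleS T; lra.
have ecv : (fun N => B * (Sinf - S N)) @ \oo --> 0.
  have -> : 0 = B * (Sinf - Sinf) by rewrite subrr mulr0.
  apply: cvgMl_tmp; apply: cvgB => //; exact: cvg_cst.
exists L; split.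
  have -> : (fun T => derive1 (fun t => PvT F v T (x + t *: (y - y'))) 0) = dd.
    apply: funext => T; rewrite derive1E.
    have := is_derive_PvT F v T x (y - y') 0; rewrite scale0r addr0 => H.
    exact: derive_val.
  exact: ddL.
set uu := y - y'.
apply/cvgrPdist_le => eps eps0.
have e3 : 0 < eps / 3 by rewrite divr_gt0.
have [N HN] : exists N, B * (Sinf - S N) <= eps / 3.
  have [N0 _ HN0] := (cvgrPdist_le _ _).1 ecv (eps/3) e3.
  exists N0; have := HN0 N0 (leqnn _); rewrite /= sub0r normrN.
  by move/(le_trans (ler_norm _)).
pose g t := PvT F v N (x + t *: uu).
have gq : (fun h => h^-1 * (g h - g 0)) @ 0^' --> dd N.
  have := is_derive_quot (is_derive_PvT F v N x uu 0).
  rewrite scale0r addr0 => H.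
  have -> : (fun h => h^-1 * (g h - g 0)) =
     (fun h => h^-1 * (PvT F v N (x + h *: uu) - PvT F v N x)).
    by apply: funext => h; rewrite /g scale0r addr0.
  exact: H.
have Hnear := (cvgrPdist_le _ _).1 gq (eps/3) e3.
rewrite near_withinE.
near=> t => Pt.
have tn0 : t != 0 by near: t; exact: nbhs_dnbhs_neq.
have Hq : `|dd N - t^-1 * (g t - g 0)| <= eps/3 by near: t; exact: Hnear.
have Hlev : forall k, `|lev F (x + t *: uu) Q k - lev F x Q k| <= `|t| * (B * b k).
  move=> k.
  have := mvt_abs (f := fun s => lev F (x + s *: uu) Q k)
     (df := fun s => levD F (x + s *: uu) uu Q k) (t := t) (M := B * b k).
  rewrite /= scale0r addr0; apply.
    by move=> s; exact: is_derive_lev.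
  move=> s hs hst; apply: HB.
  have st0 : 0 <= s / t.
    have -> : s / t = (s * t) / (t * t) by rewrite invfM mulrA mulfK.
    by rewrite divr_ge0 //; nra.
  have st1 : `|s / t| <= 1.
    by rewrite normrM normrV ?unitfE // ler_pdivrMr ?normr_gt0 // mul1r.
  have hh : 0 <= s / t <= 1 by rewrite st0 /=; apply: le_trans st1; exact: ler_norm.
  have := conv_convex Px Pt hh.
  have -> : x + t *: uu - x = t *: uu by rewrite addrAC subrr add0r.
  by rewrite scalerA divfK.
have Hdiff : `|(Pv F v (x + t *: uu) - Pv F v x) - (g t - g 0)| <= `|t| * (B * (Sinf - S N)).
  have cv1 := @PvT_cvg _ _ _ _ Hf v _ (Hcube _ Pt).
  have cv2 := @PvT_cvg _ _ _ _ Hf v _ (Hcube _ Px).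
  have cvd : (fun T => PvT F v T (x + t *: uu) - PvT F v T x) @ \oo -->
     Pv F v (x + t *: uu) - Pv F v x := cvgB cv1 cv2.
  apply: (lim_dist_le (cvd _) (N := N)) => T hT.
  rewrite /g !PvT_lev scale0r addr0.
  set lt := fun k => lev F (x + t *: uu) Q k; set lx := fun k => lev F x Q k.
  have -> : \sum_(k < T.+1) lt k - \sum_(k < T.+1) lx k -
    (\sum_(k < N.+1) lt k - \sum_(k < N.+1) lx k) =
    (\sum_(k < T.+1) lt k - \sum_(k < N.+1) lt k) -
    (\sum_(k < T.+1) lx k - \sum_(k < N.+1) lx k) by lra.
  rewrite !sum_diff // -sumrB.
  apply: le_trans (ler_norm_sum _ _ _) _.
  apply: le_trans (_ : \sum_(N.+1 <= k < T.+1) `|t| * (B * b k) <= _).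
    by apply: ler_sum => k _; exact: Hlev.
  rewrite -mulr_sumr ler_wpM2l // -mulr_sumr ler_wpM2l // -sum_diff //.
  by rewrite -/(S T) -/(S N); have := SleS T; lra.
have E : `|t^-1 * (g t - g 0) - t^-1 * (Pv F v (x + t *: uu) - Pv F v x)| <= B * (Sinf - S N).
  rewrite -mulrBr normrM normrV ?unitfE // distrC.
  by rewrite ler_pdivrMl ?normr_gt0 //.
have D1 := ddL_bound N.
have T1 := ler_distD (dd N) L (t^-1 * (Pv F v (x + t *: uu) - Pv F v x)).
have T2 := ler_distD (t^-1 * (g t - g 0)) (dd N) (t^-1 * (Pv F v (x + t *: uu) - Pv F v x)).
lra.
Unshelve. all: by end_near.
Qed.
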